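(* Let $G$ be a finite abelian group of order $n$, let $S$ be the set of bijections $\{1,\dots,n\}\to G$, let $d\ge1$, and let $\pi\in S$. Then the transversals of the Latin cube $L^d(G,\pi)$ are in bijection with the solutions of \[ \pi_1+\cdots+\pi_d=\pi\qquad(\pi_1,\dots,\pi_d\in S). \] In particular, if $T(L^d(G,\pi))$ denotes the number of transversals of $L^d(G,\pi)$, then $T(L^d(G,\pi))\cdot n!$ equals the number of solutions of \[ \pi_1+\cdots+\pi_d=\pi_{d+1}\qquad(\pi_1,\dots,\pi_{d+1}\in S). \]
   Context: Sums of functions $\{1,\dots,n\}\to G$ are pointwise. A Latin cube of dimension $d$ and order $n$ is a $d$-dimensional array indexed by $\{1,\dots,n\}^d$ with entries (symbols) in $\{1,\dots,n\}$ such that no symbol occurs more than once in any axis-parallel line. A transversal is a selection of $n$ entries such that no two lie in a common axis-parallel hyperplane (i.e. share the value of some coordinate) and no two have the same symbol. $L^d(G,\pi)$ is the Latin cube whose $(i_1,\dots,i_d)$-entry is $\pi^{-1}(\pi(i_1)+\cdots+\pi(i_d))$. *)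

(* Defs.v *)
From mathcomp Require Import all_boot all_order all_algebra.
Set Implicit Arguments. Unset Strict Implicit. Unset Printing Implicit Defensive.
Import GRing.Theory.
Local Open Scope ring_scope.

Definition is_bij (n : nat) (G : finType) (f : {ffun 'I_n -> G}) : bool :=
  injectiveb f && [forall g : G, g \in codom f].

Definition bijS (n : nat) (G : finType) : {set {ffun 'I_n -> G}} :=
  [set f : {ffun 'I_n -> G} | is_bij f].

Definition cell (n d : nat) := {ffun 'I_d -> 'I_n}.

(* pi^{-1}(g), as an option (always Some when pi is a bijection) *)
Definition pinv (n : nat) (G : finType) (pi : {ffun 'I_n -> G}) (g : G)
  : option 'I_n := [pick i | pi i == g].

Definition LdG (n d : nat) (G : finZmodType) (pi : {ffun 'I_n -> G})
  (c : cell n d) : option 'I_n :=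
  pinv pi (\sum_(k < d) pi (c k)).

Definition is_transversal (n d : nat) (T : eqType) (L : cell n d -> T)
  (X : {set cell n d}) : bool :=
  (#|X| == n) &&
  [forall x in X, forall y in X,
     (x != y) ==> ([forall k : 'I_d, x k != y k] && (L x != L y))].

Definition transversals (n d : nat) (T : eqType) (L : cell n d -> T)
  : {set {set cell n d}} := [set X : {set cell n d} | is_transversal L X].

Definition sols (n d : nat) (G : finZmodType) (pi : {ffun 'I_n -> G})
  : {set {ffun 'I_d -> {ffun 'I_n -> G}}} :=
  [set P : {ffun 'I_d -> {ffun 'I_n -> G}} | [forall k, P k \in bijS n G] &&
           [forall i : 'I_n, \sum_(k < d) P k i == pi i]].

Definition sols2 (n d : nat) (G : finZmodType)
  : {set {ffun 'I_d -> {ffun 'I_n -> G}} * {ffun 'I_n -> G}} :=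
  [set Pq : {ffun 'I_d -> {ffun 'I_n -> G}} * {ffun 'I_n -> G} | [forall k, Pq.1 k \in bijS n G] && (Pq.2 \in bijS n G) &&
            [forall i : 'I_n, \sum_(k < d) Pq.1 k i == Pq.2 i]].

(* Main.v *)
Require Import Defs.
From mathcomp Require Import all_boot all_order all_algebra.
Set Implicit Arguments. Unset Strict Implicit. Unset Printing Implicit Defensive.
Import GRing.Theory.

Section Aux.
Local Open Scope ring_scope.
Variables (G : finZmodType) (n d : nat) (pi : {ffun 'I_n -> G}) (i0 : 'I_n).
Hypotheses (hG : #|G| = n) (hd : (1 <= d)%N) (hpi : pi \in bijS n G).

Definition finv (f : {ffun 'I_n -> G}) (g : G) : 'I_n := odflt i0 [pick i | f i == g].

Lemma bijSP f : f \in bijS n G -> injective f /\ forall g, g \in codom f.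
Proof. by rewrite inE /is_bij => /andP[/injectiveP ? /forallP ?]. Qed.

Lemma bij_of_inj (f : {ffun 'I_n -> G}) : injective f -> f \in bijS n G.
Proof.
move=> inj; rewrite inE /is_bij; apply/andP; split; first exact/injectiveP.
apply/forallP => g; apply: inj_card_onto => //; by rewrite card_ord hG.
Qed.

Lemma finvK f : f \in bijS n G -> forall g, f (finv f g) = g.
Proof.
move=> /bijSP[_ su] g; rewrite /finv; case: pickP => [i /eqP //|H].
by have /codomP[i E] := su g; move: (H i) => /=; rewrite -E eqxx.
Qed.

Lemma finvK' f : f \in bijS n G -> forall i, finv f (f i) = i.
Proof. by move=> fb i; have [inj _] := bijSP fb; apply: inj; rewrite finvK. Qed.

Lemma pinv_some f g : f \in bijS n G -> pinv f g = Some (finv f g).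
Proof.
move=> fb; rewrite /pinv /finv; case: pickP => // H.
by move: (H (finv f g)) => /=; rewrite finvK // eqxx.
Qed.

Definition cellof (P : {ffun 'I_d -> {ffun 'I_n -> G}}) (s : 'I_n) : cell n d :=
  [ffun k => finv pi (P k s)].

Lemma solsP P : P \in sols d pi ->
  (forall k, P k \in bijS n G) /\ forall i, \sum_(k < d) P k i = pi i.
Proof.
rewrite inE => /andP[/forallP ? /forallP H]; split => // i; exact/eqP.
Qed.

Lemma L_cellof P s : P \in sols d pi -> @LdG n d G pi (cellof P s) = Some s.
Proof.
move=> /solsP[_ Ps]; rewrite /LdG.
under eq_bigr => k _ do rewrite ffunE finvK //.
by rewrite Ps pinv_some // finvK'.
Qed.

Definition Phi P := [set cellof P s | s : 'I_n].

Lemma Phi_trans P : P \in sols d pi -> Phi P \in transversals (@LdG n d G pi).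
Proof.
move=> Ps; have [Pb _] := solsP Ps.
have inj : injective (cellof P).
  by move=> s t E; move: (L_cellof s Ps); rewrite E L_cellof // => -[].
rewrite inE /is_transversal; apply/andP; split.
  by rewrite card_imset // card_ord.
apply/forallP => x; apply/implyP => /imsetP[s _ ->].
apply/forallP => y; apply/implyP => /imsetP[t _ ->].
apply/implyP => neq; have st : s != t by apply: contraNneq neq => ->.
apply/andP; split; last by rewrite !L_cellof.
apply/forallP => k; rewrite !ffunE; apply: contra st => /eqP E.
have [ik _] := bijSP (Pb k).
by apply/eqP; apply: ik; rewrite -(finvK hpi (P k s)) E finvK.
Qed.

Lemma Phi_inj : {in sols d pi &, injective Phi}.
Proof.
move=> P Q Ps Qs E; apply/ffunP => k; apply/ffunP => s.
have : cellof P s \in Phi Q by rewrite -E; apply: imset_f.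
case/imsetP => t _ Et.
have st : t = s by move: (L_cellof s Ps); rewrite Et L_cellof // => -[].
subst t; move/ffunP: Et => /(_ k); rewrite !ffunE => Ek.
by rewrite -(finvK hpi (P k s)) Ek finvK.
Qed.


Definition sym (x : cell n d) : 'I_n := finv pi (\sum_(k < d) pi (x k)).

Lemma L_sym x : @LdG n d G pi x = Some (sym x).
Proof. by rewrite /LdG pinv_some. Qed.

Lemma Phi_surj X : X \in transversals (@LdG n d G pi) ->
  exists2 P, P \in sols d pi & X = Phi P.
Proof.
rewrite inE /is_transversal => /andP[/eqP hX /forallP hD].
have hD' : forall x y, x \in X -> y \in X -> x != y ->
    (forall k, x k != y k) /\ sym x != sym y.
  move=> x y xX yX xy; move: (hD x); rewrite xX => /forallP /(_ y).
  rewrite yX xy /= !L_sym => /andP[/forallP H1 H2]; split; first exact: H1.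
  by apply/eqP => E; move: H2; rewrite E eqxx.
have syminj : {in X &, injective sym}.
  move=> x y xX yX E; apply/eqP; apply/negPn/negP => xy.
  by have [_ H] := hD' x y xX yX xy; move: H; rewrite E eqxx.
have su : forall s, exists2 x, x \in X & sym x = s.
  have ET : sym @: X = setT.
    apply/eqP; rewrite eqEcard subsetT cardsT card_ord (card_in_imset syminj) hX.
    by rewrite leqnn.
  move=> s; have : s \in sym @: X by rewrite ET inE.
  by case/imsetP => x xX ->; exists x.
pose c0 : cell n d := [ffun => i0].
pose xs s := odflt c0 [pick x in X | sym x == s].
have xsP : forall s, xs s \in X /\ sym (xs s) = s.
  move=> s; rewrite /xs; case: pickP => [x /andP[? /eqP ?] //|H].
  by have [x xX E] := su s; move: (H x) => /=; rewrite xX E eqxx.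
pose P : {ffun 'I_d -> {ffun 'I_n -> G}} := [ffun k => [ffun s => pi (xs s k)]].
have Ps : P \in sols d pi.
  rewrite inE; apply/andP; split.
    apply/forallP => k; apply: bij_of_inj => s t; rewrite !ffunE => E.
    have [ipi _] := bijSP hpi; have {}E := ipi _ _ E.
    have [sX ss] := xsP s; have [tX ts] := xsP t.
    case: (eqVneq (xs s) (xs t)) => [Est|ne]; first by rewrite -ss -ts Est.
    by have [/(_ k) H _] := hD' _ _ sX tX ne; move: H; rewrite E eqxx.
  apply/forallP => s; rewrite -[in X in _ == X](proj2 (xsP s)) /sym finvK //.
  by apply/eqP; apply: eq_bigr => k _; rewrite !ffunE.
exists P => //; apply/setP => x; apply/idP/imsetP.
  move=> xX; exists (sym x) => //.
  have -> : cellof P (sym x) = xs (sym x).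
    by apply/ffunP => k; rewrite !ffunE finvK'.
  have [sX ss] := xsP (sym x).
  apply/eqP/negPn/negP => ne; have [_ H] := hD' _ _ xX sX ne.
  by move: H; rewrite ss eqxx.
case=> s _ ->.
have -> : cellof P s = xs s by apply/ffunP => k; rewrite !ffunE finvK'.
by case: (xsP s).
Qed.

Lemma trans_eq : transversals (@LdG n d G pi) = Phi @: sols d pi.
Proof.
apply/setP => X; apply/idP/imsetP.
  by case/Phi_surj => P Ps ->; exists P.
by case=> P Ps ->; apply: Phi_trans.
Qed.

Lemma card_trans : #|transversals (@LdG n d G pi)| = #|sols d pi|.
Proof. by rewrite trans_eq card_in_imset //; apply: Phi_inj. Qed.

Definition Psi (Pq : {ffun 'I_d -> {ffun 'I_n -> G}} * {ffun 'I_n -> G})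
  : {ffun 'I_d -> {ffun 'I_n -> G}} * {ffun 'I_n -> G} :=
  ([ffun k => [ffun i => Pq.1 k (finv pi (Pq.2 i))]], Pq.2).

Lemma sols2_eq : sols2 n d G = Psi @: setX (sols d pi) (bijS n G).
Proof.
have [ipi _] := bijSP hpi.
apply/setP => [[Q q]]; apply/idP/imsetP.
  rewrite inE /= => /andP[/andP[/forallP Qb qb] /forallP Qs].
  have [iq _] := bijSP qb.
  pose P : {ffun 'I_d -> {ffun 'I_n -> G}} := [ffun k => [ffun j => Q k (finv q (pi j))]].
  exists (P, q).
    rewrite inE /=; apply/andP; split => //; rewrite inE; apply/andP; split.
      apply/forallP => k; apply: bij_of_inj => j j'; rewrite !ffunE.
      have [iQ _] := bijSP (Qb k) => /iQ E.
      by apply: ipi; rewrite -(finvK qb (pi j)) E finvK.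
    apply/forallP => j; under eq_bigr => k _ do rewrite ffunE ffunE.
    by rewrite (eqP (Qs _)) finvK.
  congr pair; apply/ffunP => k; apply/ffunP => i; rewrite /= !ffunE.
  by rewrite finvK // finvK'.
case=> [[P r]]; rewrite inE /= => /andP[Ps rb] ->.
have [Pb Psum] := solsP Ps; have [ir _] := bijSP rb.
rewrite inE /=; apply/andP; split; first (apply/andP; split => //).
  apply/forallP => k; apply: bij_of_inj => i j; rewrite !ffunE.
  have [iP _] := bijSP (Pb k) => /iP E.
  by apply: ir; rewrite -(finvK hpi (r i)) E finvK.
apply/forallP => i; under eq_bigr => k _ do rewrite ffunE ffunE.
by rewrite Psum finvK.
Qed.

Lemma Psi_inj : {in setX (sols d pi) (bijS n G) &, injective Psi}.
Proof.
move=> [P q] [P' q'] /setXP[_ qb] _ [E1 E2]; rewrite /= in E1 E2; subst q'.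
congr pair; apply/ffunP => k; apply/ffunP => j.
move/ffunP: E1 => /(_ k) /ffunP /(_ (finv q (pi j))); rewrite !ffunE.
by rewrite finvK // finvK'.
Qed.

Lemma card_bijS : #|bijS n G| = n`!.
Proof.
have -> : bijS n G = [set f : {ffun 'I_n -> G} | injectiveb f].
  apply/setP => f; rewrite !inE /is_bij; case: (boolP (injectiveb f)) => //= /injectiveP inj.
  by apply/forallP => g; apply: inj_card_onto => //; rewrite card_ord hG.
by rewrite card_inj_ffuns card_ord hG ffactnn.
Qed.

Lemma card_sols2 : #|sols2 n d G| = (#|sols d pi| * n`!)%N.
Proof. by rewrite sols2_eq (card_in_imset Psi_inj) cardsX card_bijS. Qed.

End Aux.

Theorem lemma7p1 (G : finZmodType) (n d : nat) (pi : {ffun 'I_n -> G}) :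
  #|G| = n -> (1 <= d)%N -> pi \in bijS n G ->
  (exists f : {X | X \in transversals (@LdG n d G pi)} ->
              {P | P \in @sols n d G pi},
      bijective f) /\
  (#|transversals (@LdG n d G pi)| * n`! = #|sols2 n d G|)%N.
Proof.
move=> hG hd hpi.
have n0 : (0 < n)%N by rewrite -hG; apply/card_gt0P; exists (0 : G)%R.
pose i0 : 'I_n := Ordinal n0.
split; last by rewrite (card_trans d i0 hG hpi) (card_sols2 d i0 hG hpi).
pose g (P : {P | P \in @sols n d G pi}) : {X | X \in transversals (@LdG n d G pi)} :=
  exist _ (Phi pi i0 (val P)) (Phi_trans i0 hpi (valP P)).
have ginj : injective g.
  by move=> P Q /(congr1 val) /= /(Phi_inj hpi (valP P) (valP Q)) /val_inj.
have gb : bijective g.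
  by apply: (inj_card_bij ginj); rewrite !card_sig (@eq_card _ _ (transversals (@LdG n d G pi))) // (@eq_card _ _ (sols d pi)) // (card_trans d i0 hG hpi).
case: gb => h gh hg; exists h; exact: (Bijective hg gh).
Qed.
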